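(* Let $OPT_{ST}=(T\cup OPT,F)$ be a feasible Steiner tree for the associated Steiner tree instance of a CacAP instance, with $|F|=|OPT|+t-1$ where $OPT$ is an optimal CacAP solution and $t=|T|$, in which every terminal has degree $1$; root it at a Steiner node $r$ adjacent to at least one terminal, and apply the random marking scheme described in the context. Let $\ell$ be a non-root Steiner node, let $\ell_q$ be the lowest proper ancestor of $\ell$ with $t(\ell_q)>0$, let $\ell=\ell_1,\ell_2,\ldots,\ell_q$ ($q\ge 2$) be the simple path from $\ell$ to $\ell_q$, and let $d_i=d(\ell_i)$. Then $$c(\ell)=\sum_{h=1}^{q-2}\frac{(d_{h+1}-1)\,H_{d_1+\cdots+d_h-h+1}}{d_2\cdots d_{h+1}}+\frac{H_{d_1+\cdots+d_{q-1}-q+2}}{d_2\cdots d_{q-1}},$$ where an empty product equals $1$.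
   Context: A cactus is a connected undirected multigraph (length-2 cycles allowed) in which every edge belongs to exactly one cycle. A CacAP instance is a cactus $G=(V,E)$ with a link set $L$; $A\subseteq L$ is feasible if $(V,E\cup A)$ is $3$-edge-connected; $OPT$ is a minimum-cardinality feasible solution. For a link $\ell=\{v_0,v_{q+1}\}$, let $v_1,\dots,v_q$ be the nodes of degree $\ge4$ other than $v_0,v_{q+1}$ lying (in order) on every simple $v_0$-$v_{q+1}$ path; the pairs $\{v_i,v_{i+1}\}$ are the projections of $\ell$, each on a distinct cycle. Two links with endpoints on a common cycle $C$ cross if they share an endpoint or a simple path along $C$ between the endpoints of one contains exactly one endpoint of the other as an internal node; general links cross if some of their projections cross. The associated Steiner tree instance $G_{ST}=(T\cup L,E_{ST})$ has terminals $T$ = degree-$2$ nodes of $G$, Steiner nodes $L$, edges $\{\ell,v\}$ for each link $\ell$ with endpoint $v\in T$, and $\{\ell,\ell'\}$ for crossing links. A feasible Steiner tree is a subtree of $G_{ST}$ containing $T$. In the rooted tree $OPT_{ST}$, for a Steiner node $\ell$, $d(\ell)$ is its number of children and $t(\ell)$ its number of terminal children. Marking scheme: independently for each Steiner node $\ell$, if $t(\ell)>0$, one terminal child $v$ of $\ell$ is chosen uniformly at random and the edge $\{\ell,v\}$ is marked; otherwise one child $\ell'$ of $\ell$ is chosen uniformly at random and $\{\ell,\ell'\}$ is marked. All other edges are unmarked. Each Steiner node $\ell$ thus has exactly one marked child edge $m(\ell)$. For an edge $e\in F$, the witness set $W(e)$ is the set of pairs of terminals $\{t',t''\}$ such that the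 simple $t'$-$t''$ path in $OPT_{ST}$ contains $e$ and exactly one unmarked edge; $w(e)=|W(e)|$. $H_i=1+\frac12+\cdots+\frac1i$ is the $i$-th harmonic number, and the cost of a Steiner node is $c(\ell)=E[H_{w(m(\ell))}]$. *)

(* Defs.v *)
From mathcomp Require Import all_boot all_order all_algebra.
Set Implicit Arguments. Unset Strict Implicit. Unset Printing Implicit Defensive.
Import Order.TTheory GRing.Theory Num.Theory.
Local Open Scope ring_scope.

(* The rooted Steiner tree OPT_ST is given by its vertex set V (= T u OPT),
   the terminal set T (Steiner nodes = ~: T), the root r and the parent map
   par (par r = r).  The tree edge {v, par v} (v != r) is identified with
   its lower endpoint v. *)
Section SteinerTree.
Variables (V : finType) (T : {set V}) (r : V) (par : V -> V).

Definition children (v : V) : {set V} := [set u | (u != r) && (par u == v)].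
Definition dS (v : V) : nat := #|children v|.
Definition tS (v : V) : nat := #|children v :&: T|.

(* u is an ancestor-or-self of v (depth of a tree on V is < #|V|) *)
Definition anc (u v : V) : bool := [exists n : 'I_#|V|, iter n par v == u].

Definition pathE (t1 t2 : V) : {set V} :=
  [set v | (v != r) && (anc v t1 != anc v t2)].

Definition markedE (m : {ffun V -> V}) : {set V} :=
  [set v | (v != r) && (m (par v) == v)].

Definition witness (m : {ffun V -> V}) (c : V) : {set {set V}} :=
  [set P : {set V} | [exists t1 : V, exists t2 : V,
     [&& t1 \in T, t2 \in T, t1 != t2, P == [set t1; t2],
         c \in pathE t1 t2 & #|pathE t1 t2 :\: markedE m| == 1]]].
Definition w (m : {ffun V -> V}) (c : V) : nat := #|witness m c|.

Definition allowed (l : V) : {set V} :=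
  if (0 < tS l)%N then children l :&: T else children l.

(* outcomes of the marking scheme (value on terminals fixed to be a dummy) *)
Definition valid_marking (m : {ffun V -> V}) : bool :=
  [forall v, if v \in T then m v == v else m v \in allowed v].

(* probability of an outcome: independent uniform choices at Steiner nodes *)
Definition mark_prob (R : realFieldType) (m : {ffun V -> V}) : R :=
  \prod_(l in ~: T) (#|allowed l|%:R)^-1.

Definition harm (R : realFieldType) (n : nat) : R :=
  \sum_(1 <= k < n.+1) (k%:R)^-1.

Definition cost (R : realFieldType) (l : V) : R :=
  \sum_(m : {ffun V -> V} | valid_marking m) mark_prob R m * harm R (w m (m l)).

(* d_{i+1} = d(l_{i+1}) where l_{i+1} = par^i l *)
Definition dpath (l : V) (i : nat) : nat := dS (iter i par l).

End SteinerTree.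

(* Main.v *)
Require Import Defs.
From mathcomp Require Import all_boot all_order all_algebra.
From mathcomp Require Import zify ring.
Set Implicit Arguments. Unset Strict Implicit. Unset Printing Implicit Defensive.
Import Order.TTheory GRing.Theory Num.Theory.

Lemma card_fam (V : finType) (S : V -> {set V}) :
  #|[pred m : {ffun V -> V} | [forall v, m v \in S v]]| = \prod_(v : V) #|S v|.
Proof.
have := @card_family V (fun _ => V) (fun v => mem (S v)).
rewrite foldrE big_map big_enum /= => <-.
by apply: eq_card => f; rewrite !inE.
Qed.

Section Tree.
Variables (V : finType) (T : {set V}) (r : V) (par : V -> V).
Hypothesis Hpar_r : par r = r.
Hypothesis Hreach : forall v : V, exists n : nat, iter n par v = r.
Hypothesis Hr : r \notin T.
Hypothesis Hterm_leaf : forall t u : V, t \in T -> u != r -> par u != t.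

Lemma reach_b v : exists n, iter n par v == r.
Proof. by have [n hn] := Hreach v; exists n; apply/eqP. Qed.

Notation anc := (anc par).

Definition dep v := ex_minn (reach_b v).

Lemma depP v : iter (dep v) par v = r /\ (forall n, iter n par v = r -> dep v <= n).
Proof.
rewrite /dep; case: ex_minnP => n /eqP Hn Hmin; split => // k Hk.
by apply: Hmin; apply/eqP.
Qed.

Lemma iter_r n : iter n par r = r.
Proof. by elim: n => //= n ->. Qed.

Lemma dep_r : dep r = 0.
Proof. have [_ H] := depP r; by apply/eqP; rewrite -leqn0; apply: (H 0). Qed.

Lemma dep0 v : dep v = 0 -> v = r.
Proof. by have [H _] := depP v => E; rewrite E in H. Qed.

Lemma dep_par v : dep (par v) = (dep v).-1.
Proof.
have [vr | vr] := eqVneq v r; first by rewrite vr Hpar_r dep_r.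
have [H1 H2] := depP v; have [H3 H4] := depP (par v).
have : dep v != 0 by apply/eqP => /dep0; apply/eqP.
case E: (dep v) => [//|k] _ /=.
apply/eqP; rewrite eqn_leq; apply/andP; split.
  by apply: H4; rewrite -iterSr -E.
have := H2 (dep (par v)).+1; rewrite iterSr => /(_ H3); rewrite E.
by [].
Qed.

Lemma dep_iter n v : dep (iter n par v) = dep v - n.
Proof.
elim: n => [|n IH] /=; first by rewrite subn0.
by rewrite dep_par IH; lia.
Qed.

Lemma iter_ge n v : dep v <= n -> iter n par v = r.
Proof.
move=> H; have [H1 _] := depP v.
by rewrite -(subnK H) iterD H1 iter_r.
Qed.

Lemma iter_eq_r n v : (iter n par v == r) = (dep v <= n).
Proof.
apply/eqP/idP; last exact: iter_ge.
by have [_ H] := depP v; apply: H.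
Qed.

Lemma dep_lt v : dep v < #|V|.
Proof.
pose f (i : 'I_(dep v).+1) := iter i par v.
have inj : injective f.
  move=> i j /(congr1 dep); rewrite /f !dep_iter => E.
  apply: ord_inj; have := ltn_ord i; have := ltn_ord j; lia.
by have := leq_card f inj; rewrite card_ord.
Qed.

Lemma ancP u v : reflect (exists n, iter n par v = u) (anc u v).
Proof.
apply: (iffP existsP) => [[n /eqP H]|[n H]]; first by exists n.
have [lt|ge] := ltnP n #|V|; first by exists (Ordinal lt); apply/eqP.
exists (Ordinal (dep_lt v)); apply/eqP => /=.
rewrite -H iter_ge ?iter_ge //; have := dep_lt v; lia.
Qed.

Lemma anc_refl v : anc v v.
Proof. by apply/ancP; exists 0. Qed.

Lemma anc_par v : anc (par v) v.
Proof. by apply/ancP; exists 1. Qed.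

Lemma anc_trans u v w : anc u v -> anc v w -> anc u w.
Proof.
move=> /ancP[a Ha] /ancP[b Hb]; apply/ancP; exists (a + b).
by rewrite iterD Hb.
Qed.

Lemma anc_rt v : anc r v.
Proof. by apply/ancP; exists (dep v); have [] := depP v. Qed.

Lemma anc_dep u v : anc u v -> iter (dep v - dep u) par v = u.
Proof.
move=> /ancP[n Hn].
have [ur|ur] := eqVneq u r.
  by rewrite ur dep_r subn0; have [] := depP v.
have Hd : dep u = dep v - n by rewrite -Hn dep_iter.
have : n < dep v.
  rewrite ltnNge; apply/negP => /iter_ge; rewrite Hn; exact/eqP.
move=> lt; rewrite Hd; have -> : dep v - (dep v - n) = n by lia.
by [].
Qed.

Lemma anc_le u v : anc u v -> dep u <= dep v.
Proof. move=> /anc_dep/(congr1 dep); rewrite dep_iter => E; lia. Qed.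

Lemma anc_eq u v : anc u v -> dep u = dep v -> u = v.
Proof. by move=> /anc_dep E F; rewrite -E F subnn. Qed.

Lemma anc_antisym u v : anc u v -> anc v u -> u = v.
Proof.
move=> H1 H2; apply: anc_eq => //.
by apply/eqP; rewrite eqn_leq !anc_le.
Qed.

Lemma anc_total a b v : anc a v -> anc b v ->
  anc a b \/ anc b a.
Proof.
move=> /ancP[x Hx] /ancP[y Hy].
have [le|le] := leqP x y.
  right; apply/ancP; exists (y - x); by rewrite -Hx -iterD subnK.
left; apply/ancP; exists (x - y); rewrite -Hy -iterD subnK //; lia.
Qed.

Lemma par_neq v : v != r -> par v != v.
Proof.
move=> vr; apply/eqP => /(congr1 dep); rewrite dep_par => E.
have : dep v != 0 by apply/eqP => /dep0; apply/eqP.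
lia.
Qed.

Lemma dep_parS v : v != r -> dep v = (dep (par v)).+1.
Proof.
move=> vr; rewrite dep_par; have : dep v != 0 by apply/eqP => /dep0; apply/eqP.
lia.
Qed.

Lemma anc_parE u v : v != r ->
  anc u v = (u == v) || anc u (par v).
Proof.
move=> vr; apply/idP/idP.
  move=> H; have := anc_dep H; case E: (dep v - dep u) => [|k] /=.
    by move=> ->; rewrite eqxx.
  move=> <-; apply/orP; right; apply/ancP; exists k; by rewrite -iterSr.
case/orP => [/eqP -> |H]; first exact: anc_refl.
exact: anc_trans H (anc_par v).
Qed.

Lemma anc_ne_par u v : anc u v -> u != v -> v != r /\ anc u (par v).
Proof.
move=> H ne; have vr : v != r.
  apply/eqP => E; move: H; rewrite E => H.
  by move: ne; rewrite (anc_antisym H (anc_rt u)) E eqxx.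
by split => //; move: H; rewrite anc_parE // (negbTE ne).
Qed.

Lemma child_toward z t : anc z t -> z != t ->
  exists2 c, c != r & par c = z /\ anc c t.
Proof.
move=> H ne; have E := anc_dep H.
case Ek: (dep t - dep z) E => [|k] E; first by move: ne; rewrite -E eqxx.
exists (iter k par t).
  apply/eqP => /(congr1 dep); rewrite dep_iter dep_r; lia.
split; first by rewrite -iterS.
by apply/ancP; exists k.
Qed.

Lemma anc_term t v : t \in T -> anc t v -> v = t.
Proof.
move=> tT H; apply/eqP; apply/negP => /negP ne.
have ne' : t != v by rewrite eq_sym.
have [c cr [pc _]] := child_toward H ne'.
by move: (Hterm_leaf tT cr); rewrite pc eqxx.
Qed.

Lemma anc_iter_form x v : anc x v -> x != r ->
  exists2 j, j < dep v & x = iter j par v.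
Proof.
move=> H xr; exists (dep v - dep x); last by rewrite anc_dep.
have : dep x != 0 by apply/eqP => /dep0; apply/eqP.
have := anc_le H; lia.
Qed.

Section Mark.
Variable m : {ffun V -> V}.
Hypothesis Hm : valid_marking T r par m.


Lemma m_term t : t \in T -> m t = t.
Proof. by move=> tT; move/forallP: Hm => /(_ t); rewrite tT => /eqP. Qed.

Lemma m_allowed x : x \notin T -> m x \in allowed T r par x.
Proof. by move=> xT; move/forallP: Hm => /(_ x); rewrite (negbTE xT). Qed.

Lemma allowed_sub x : allowed T r par x \subset children r par x.
Proof. rewrite /allowed; case: ifP => _ //; exact: subsetIl. Qed.

Lemma m_child x : x \notin T -> m x != r /\ par (m x) = x.
Proof.
move=> /m_allowed H; have := subsetP (allowed_sub x) _ H.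
by rewrite inE => /andP[-> /eqP].
Qed.

Definition bot x := iter #|V| m x.

Lemma iterm_term x j n : iter j m x \in T -> j <= n -> iter n m x = iter j m x.
Proof.
move=> H /subnK <-; rewrite iterD; elim: (n - j) => [|k IH] //=.
by rewrite IH m_term.
Qed.

Lemma iterm_dep x n : iter n m x \notin T -> dep (iter n m x) = dep x + n.
Proof.
elim: n => [|n IH] /=; first by rewrite addn0.
have [inT|nT] := boolP (iter n m x \in T).
  by rewrite m_term // inT.
move=> _; have [mr pm] := m_child nT.
by rewrite (dep_parS mr) pm IH // addnS.
Qed.

Lemma bot_T x : bot x \in T.
Proof.
rewrite /bot; apply/negPn/negP => H; have := iterm_dep H.
have := dep_lt (iter #|V| m x); lia.
Qed.

Lemma chain x n : anc x (iter n m x) /\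
  forall y, anc x y -> anc y (iter n m x) -> y != x -> m (par y) = y.
Proof.
elim: n => [|n [IH1 IH2]] /=.
  split; first exact: anc_refl.
  by move=> y H1 H2; rewrite (anc_antisym H1 H2) eqxx.
have [inT|nT] := boolP (iter n m x \in T).
  by rewrite m_term.
have [mr pm] := m_child nT.
split; first by apply: anc_trans IH1 _; rewrite -{1}pm; exact: anc_par.
move=> y H1; rewrite (anc_parE _ mr) pm => /orP[/eqP -> _|H2 yx].
  by rewrite pm.
exact: IH2.
Qed.

Lemma anc_bot x : anc x (bot x).
Proof. by have [] := chain x #|V|. Qed.

Lemma bot_chain x y : anc x y -> anc y (bot x) -> y != x -> m (par y) = y.
Proof. by have [_ H] := chain x #|V|; exact: H. Qed.

Lemma bot_uniq x t : t \in T -> anc x t ->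
  (forall y, anc x y -> anc y t -> y != x -> m (par y) = y) -> t = bot x.
Proof.
move=> tT Hxt Hch.
have key : forall n, anc (iter n m x) t.
  elim=> [|n IH] //=.
  have [inT|nT] := boolP (iter n m x \in T); first by rewrite m_term.
  have [e|ne] := eqVneq (iter n m x) t; first by move: nT; rewrite e tT.
  have [c cr [pc Hct]] := child_toward IH ne.
  have [Hxn _] := chain x n.
  have Hxc : anc x c by apply: anc_trans Hxn _; rewrite -pc; exact: anc_par.
  have cx : c != x.
    apply/eqP => E; have : anc c (par c) by rewrite pc E.
    move=> H; have := anc_antisym H (anc_par c) => E'.
    by move: (par_neq cr); rewrite -E' eqxx.
  by have := Hch c Hxc Hct cx; rewrite pc => ->.
by rewrite (anc_term (bot_T x) (key #|V|)).
Qed.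

Lemma bot_eq x y : anc x y ->
  (forall z, anc x z -> anc z y -> z != x -> m (par z) = z) -> bot x = bot y.
Proof.
move=> Hxy Hch; apply/esym/bot_uniq; first exact: bot_T.
  exact: anc_trans Hxy (anc_bot y).
move=> z Hxz Hzb zx.
have [Hzy|Hyz] := anc_total Hzb (anc_bot y).
  exact: Hch.
have [e|ne] := eqVneq z y; first by apply: Hch => //; rewrite e; exact: anc_refl.
exact: bot_chain Hyz Hzb ne.
Qed.

Lemma lca a b : exists z, [/\ anc z a, anc z b &
  forall y, anc y a -> anc y b -> anc y z].
Proof.
have P0 : anc r a && anc r b by rewrite !anc_rt.
case: (@arg_maxnP V r [pred y | anc y a && anc y b] dep P0) => z /andP[za zb] zmax.
exists z; split => // y ya yb.
have [//|zy] := anc_total ya za.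
have /= := zmax y; rewrite ya yb => /(_ isT) le.
have E : dep z = dep y by apply/eqP; rewrite eqn_leq (anc_le zy) le.
by rewrite (anc_eq zy E) anc_refl.
Qed.

Lemma pathE_sym t1 t2 : pathE r par t1 t2 = pathE r par t2 t1.
Proof. by apply/setP => v; rewrite !inE; congr (_ && ~~ _); exact: eq_sym. Qed.

Lemma inPath v t1 t2 : (v \in pathE r par t1 t2) = (v != r) && (anc v t1 != anc v t2).
Proof. by rewrite inE. Qed.

Lemma inMarked v : (v \in markedE r par m) = (v != r) && (m (par v) == v).
Proof. by rewrite inE. Qed.

Definition unm c := (c != r) && (m (par c) != c).

Lemma G1 c : unm c ->
  pathE r par (bot (par c)) (bot c) :\: markedE r par m = [set c].
Proof.
move=> /andP[cr cu]; apply/setP => v; rewrite !inE.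
have ac := anc_par c.
apply/idP/idP.
  case/and3P=> vu vr Hv; rewrite vr /= in vu.
  have [Hv2|Hv2] := boolP (anc v (bot c)).
    have Hv1 : ~~ anc v (bot (par c)) by move: Hv; rewrite Hv2; case: (anc v _).
    have [Hvc|Hcv] := anc_total Hv2 (anc_bot c).
      have [//|ne] := eqVneq v c.
      have [_ H] := anc_ne_par Hvc ne.
      by move: Hv1; rewrite (anc_trans H (anc_bot _)).
    have [//|ne] := eqVneq v c.
    by move: vu; rewrite (bot_chain Hcv Hv2) ?eqxx // eq_sym.
  have Hv1 : anc v (bot (par c)) by move: Hv; rewrite (negbTE Hv2); case: (anc v _).
  have [Hvx|Hxv] := anc_total Hv1 (anc_bot (par c)).
    by move: Hv2; rewrite (anc_trans (anc_trans Hvx ac) (anc_bot c)).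
  have [e|ne] := eqVneq v (par c).
    by move: Hv2; rewrite e (anc_trans ac (anc_bot c)).
  by move: vu; rewrite (bot_chain Hxv Hv1 ne) eqxx.
move/eqP => ->; rewrite cr (negbTE cu) /= anc_bot.
case H: (anc c (bot (par c))) => //.
have ne : c != par c by rewrite eq_sym par_neq.
by move: cu; rewrite (bot_chain ac H ne) eqxx.
Qed.


Lemma G2 t1 t2 c : t1 \in T -> t2 \in T -> t1 != t2 ->
  pathE r par t1 t2 :\: markedE r par m = [set c] ->
  (t1 = bot (par c) /\ t2 = bot c) \/ (t1 = bot c /\ t2 = bot (par c)).
Proof.
move=> T1 T2 ne E.
have key : forall v, v \in pathE r par t1 t2 -> v != c -> m (par v) = v.
  move=> v vp vc; have : v \notin pathE r par t1 t2 :\: markedE r par m.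
    by rewrite E inE.
  by rewrite in_setD vp andbT negbK inMarked => /andP[_ /eqP].
have : c \in pathE r par t1 t2 :\: markedE r par m by rewrite E set11.
rewrite in_setD inPath => /andP[_ /andP[cr Hc]].
wlog Hc2: t1 t2 T1 T2 ne E key Hc / anc c t2.
  move=> W; have [H|H] := boolP (anc c t2); first exact: W.
  have H1 : anc c t1 by move: Hc; rewrite (negbTE H); case: (anc c t1).
  have ne' : t2 != t1 by rewrite eq_sym.
  have E' : pathE r par t2 t1 :\: markedE r par m = [set c] by rewrite pathE_sym.
  have key' : forall v, v \in pathE r par t2 t1 -> v != c -> m (par v) = v.
    by move=> v; rewrite pathE_sym; exact: key.
  have Hc' : anc c t2 != anc c t1 by rewrite eq_sym.
  by case: (W t2 t1 T2 T1 ne' E' key' Hc' H1) => [[-> ->]|[-> ->]]; [right|left].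
have Hc1 : ~~ anc c t1 by move: Hc; rewrite Hc2; case: (anc c t1).
have [z [z1 z2 zmax]] := lca t1 t2.
have zt1 : z != t1.
  apply/eqP => e; rewrite e in z2; have := anc_term T1 z2 => e2.
  by move: ne; rewrite e2 eqxx.
have zt2 : z != t2.
  apply/eqP => e; rewrite e in z1; have := anc_term T2 z1 => e2.
  by move: ne; rewrite e2 eqxx.
have [c1 c1r [pc1 a1]] := child_toward z1 zt1.
have [c2 c2r [pc2 a2]] := child_toward z2 zt2.
have nc1 : ~~ anc c1 t2.
  apply/negP => h; have h' := zmax c1 a1 h.
  have h2 : anc z c1 by rewrite -pc1; exact: anc_par.
  have e := anc_antisym h' h2.
  by move: (par_neq c1r); rewrite pc1 e eqxx.
have nc2 : ~~ anc c2 t1.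
  apply/negP => h; have h' := zmax c2 h a2.
  have h2 : anc z c2 by rewrite -pc2; exact: anc_par.
  have e := anc_antisym h' h2.
  by move: (par_neq c2r); rewrite pc2 e eqxx.
have c1p : c1 \in pathE r par t1 t2 by rewrite inPath c1r a1 (negbTE nc1).
have c2p : c2 \in pathE r par t1 t2 by rewrite inPath c2r a2 (negbTE nc2).
have c1c : c1 != c by apply/eqP => e; move: nc1; rewrite e Hc2.
have m1 := key c1 c1p c1c.
have c2c : c2 = c.
  apply/eqP; apply/negP => /negP ne2; have m2 := key c2 c2p ne2.
  rewrite pc2 in m2; rewrite pc1 m2 in m1.
  by move: nc1; rewrite -m1 a2.
subst c2.
left; split.
  rewrite pc2; apply: bot_uniq T1 z1 _ => y zy yt1 yz.
  have zy' : z != y by rewrite eq_sym.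
  have [yr _] := anc_ne_par zy zy'.
  apply: key.
    rewrite inPath yr yt1 /=; apply/negP => yt2.
    by move: yz; rewrite (anc_antisym (zmax y yt1 yt2) zy) eqxx.
  by apply/eqP => e; move: Hc1; rewrite -e yt1.
apply: bot_uniq T2 Hc2 _ => y cy yt2 yc.
have cy' : c != y by rewrite eq_sym.
have [yr _] := anc_ne_par cy cy'.
apply: key => //.
rewrite inPath yr yt2 /=; case H: (anc y t1) => //.
by move: Hc1; rewrite (anc_trans cy H).
Qed.


Lemma set2_eq (a b a' b' : V) : [set a; b] = [set a'; b'] ->
  (a = a' /\ b = b') \/ (a = b' /\ b = a').
Proof.
move=> E.
have ha : a \in [set a'; b'] by rewrite -E set21.
have hb : b \in [set a'; b'] by rewrite -E set22.
have ha' : a' \in [set a; b] by rewrite E set21.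
have hb' : b' \in [set a; b] by rewrite E set22.
rewrite !inE in ha hb ha' hb'.
case/orP: ha => /eqP ea; case/orP: hb => /eqP eb; subst.
- by case/orP: hb' => /eqP ->; [left|left].
- by left.
- by right.
- by case/orP: ha' => /eqP ->; [right|right].
Qed.

Lemma unm_of c t1 t2 : c \in pathE r par t1 t2 :\: markedE r par m -> unm c.
Proof.
rewrite in_setD inMarked inPath => /andP[H /andP[cr _]].
by rewrite /unm cr; rewrite cr /= in H.
Qed.

Definition pairOf c := [set bot (par c); bot c].

Definition A0 e := [set c | unm c && (e \in pathE r par (bot (par c)) (bot c))].

Lemma witness_eq e : witness T r par m e = pairOf @: A0 e.
Proof.
apply/setP => P; rewrite inE; apply/existsP/imsetP.
  case=> t1 /existsP[t2 /and5P[T1 T2 ne /eqP-> /andP[He /cards1P[c Ec]]]].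
  have cin : c \in pathE r par t1 t2 :\: markedE r par m by rewrite Ec set11.
  have u := unm_of cin.
  have [[e1 e2]|[e1 e2]] := G2 T1 T2 ne Ec; subst t1 t2.
    by exists c => //; rewrite inE u He.
  by exists c; [rewrite inE u pathE_sym He | rewrite /pairOf setUC].
case=> c; rewrite inE => /andP[u He] ->.
exists (bot (par c)); apply/existsP; exists (bot c).
rewrite !bot_T He G1 // cards1 eqxx /= !andbT.
apply/eqP => E; have := G1 u; rewrite E.
have -> : pathE r par (bot c) (bot c) = set0 by apply/setP => v; rewrite !inE eqxx andbF.
rewrite set0D => E2; have : c \in [set c] by rewrite set11.
by rewrite -E2 inE.
Qed.

Lemma pairOf_inj e : {in A0 e &, injective pairOf}.
Proof.
move=> c c'; rewrite !inE => /andP[u _] /andP[u' _] E.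
have := G1 u; have := G1 u'.
have [[e1 e2]|[e1 e2]] := set2_eq E.
  by rewrite e1 e2 => -> /set1_inj.
by rewrite e1 e2 pathE_sym => -> /set1_inj.
Qed.

Lemma w_A0 e : w T r par m e = #|A0 e|.
Proof. by rewrite /w witness_eq card_in_imset //; exact: pairOf_inj. Qed.

Section Comp.
Variables (l top : V).
Hypothesis Hl : l \notin T.
Hypothesis Htop_anc : anc top l.
Hypothesis Htop_r : top != r.
Hypothesis Htop_unm : m (par top) != top.
Hypothesis Hmid : forall y, anc top y -> anc y l -> y != top -> m (par y) = y.

Lemma anc_self_par v : v != r -> ~~ anc v (par v).
Proof.
move=> vr; apply/negP => H; have := anc_antisym H (anc_par v) => e.
by move: (par_neq vr); rewrite -e eqxx.
Qed.

Lemma G3 c : unm c ->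
  (m l \in pathE r par (bot (par c)) (bot c)) =
  (c == top) || (anc (par c) l && anc top (par c)).
Proof.
move=> /andP[cr cu].
have [er pe] := m_child Hl.
have me : m (par (m l)) = m l by rewrite pe.
have ae : anc l (m l) by rewrite -{1}pe; exact: anc_par.
have botel : bot (m l) = bot l.
  apply/esym/bot_eq => // z lz ze zl.
  have [/eqP ->//|] := boolP (z == m l).
  move=> zne; have [_ H] := anc_ne_par ze zne; rewrite pe in H.
  by move: zl; rewrite (anc_antisym lz H) eqxx.
have bottl : bot top = bot l by apply: bot_eq.
have ce : c != m l by apply/eqP => e; move: cu; rewrite e me eqxx.
have ac := anc_par c.
rewrite inPath er /=.
apply/idP/idP.
  move=> Hx; case He2: (anc (m l) (bot c)).
    have He1 : ~~ anc (m l) (bot (par c)) by move: Hx; rewrite He2; case: (anc _ _).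
    have [Hec|Hce] := anc_total He2 (anc_bot c).
      have [_ H] := anc_ne_par Hec ltac:(by rewrite eq_sym).
      by move: He1; rewrite (anc_trans H (anc_bot _)).
    have [_ Hcl] := anc_ne_par Hce ce; rewrite pe in Hcl.
    have [Hct|Htc] := anc_total Hcl Htop_anc.
      have [/eqP -> //|ct] := boolP (c == top).
      have := bot_chain Hct (anc_trans Htop_anc (anc_trans ae He2)).
      by move=> /(_ ltac:(by rewrite eq_sym)) E; move: Htop_unm; rewrite E eqxx.
    have [-> //|ct] := eqVneq c top.
    by move: cu; rewrite (Hmid Htc Hcl ct) eqxx.
  have He1 : anc (m l) (bot (par c)) by move: Hx; rewrite He2; case: (anc _ _).
  have [Hex|Hxe] := anc_total He1 (anc_bot (par c)).
    by move: He2; rewrite (anc_trans (anc_trans Hex ac) (anc_bot c)).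
  have xe : par c != m l.
    by apply/eqP => e; move: He2; rewrite -e (anc_trans ac (anc_bot c)).
  have [_ Hxl] := anc_ne_par Hxe xe; rewrite pe in Hxl.
  rewrite Hxl /=; apply/orP; right.
  have [Hxt|//] := anc_total Hxl Htop_anc.
  have [<-|xt] := eqVneq (par c) top; first exact: anc_refl.
  have := bot_chain Hxt (anc_trans Htop_anc (anc_trans ae He1)).
  by move=> /(_ ltac:(by rewrite eq_sym)) E; move: Htop_unm; rewrite E eqxx.
case/orP => [/eqP ct|/andP[Hxl Htx]].
  rewrite ct bottl -botel anc_bot.
  case H: (anc (m l) (bot (par top))) => //.
  have := bot_chain (anc_par top) (anc_trans Htop_anc (anc_trans ae H)).
  by rewrite eq_sym par_neq // => /(_ isT) E; move: Htop_unm; rewrite E eqxx.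
have botx : bot (par c) = bot l.
  apply: bot_eq => // z xz zl zx; apply: Hmid => //; first exact: anc_trans Htx xz.
  apply/eqP => e; rewrite e in xz zx.
  by move: zx; rewrite (anc_antisym Htx xz) eqxx.
rewrite botx -botel anc_bot.
case H: (anc (m l) (bot c)) => //.
have [Hec|Hce] := anc_total H (anc_bot c).
  have [_ H2] := anc_ne_par Hec ltac:(by rewrite eq_sym).
  have e1 := anc_antisym Hxl (anc_trans ae H2).
  rewrite e1 in H2.
  by move: (anc_self_par er); rewrite pe H2.
have [_ Hcl] := anc_ne_par Hce ce; rewrite pe in Hcl.
have ct : c != top.
  apply/eqP => e; rewrite -e in Htx.
  by move: (anc_self_par cr); rewrite Htx.
by move: cu; rewrite (Hmid (anc_trans Htx ac) Hcl ct) eqxx.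
Qed.

Definition Ucomp := [set x | anc x l && anc top x].

Lemma w_comp : w T r par m (m l) = (\sum_(x in Ucomp) (dS r par x).-1).+1.
Proof.
rewrite w_A0.
have -> : A0 (m l) = top |: [set c | unm c && (par c \in Ucomp)].
  apply/setP => c; rewrite /A0 in_setU1 in_set [c \in [set _ | _]]in_set.
  have [u|nu] := boolP (unm c).
    by rewrite /= G3 // /Ucomp in_set.
  rewrite /= orbF; apply/esym/eqP => e; move: nu; rewrite e /unm Htop_r Htop_unm.
  by [].
rewrite cardsU1 inE negb_and.
have -> : ~~ (par top \in Ucomp).
  by rewrite inE negb_and (anc_self_par Htop_r) orbT.
rewrite orbT add1n; congr S.
rewrite -sum1_card (partition_big par (fun x => x \in Ucomp)); last first.
  by move=> c; rewrite inE => /andP[].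
apply: eq_bigr => x xU0; have xU : x \in Ucomp := xU0.
have xT : x \notin T.
  apply/negP => xT; move: xU; rewrite /Ucomp inE => /andP[xl _].
  by move: Hl; rewrite (anc_term xT xl) xT.
have [mr pm] := m_child xT.
transitivity #|children r par x :\ m x|.
  rewrite -sum1_card; apply: eq_bigl => c; rewrite !inE.
  case e: (par c == x); last by rewrite !andbF.
  have xU2 : anc x l && anc top x by move: xU; rewrite /Ucomp inE.
  move/eqP: e => e; rewrite e xU2 /unm !andbT andbC.
  by rewrite e [m x == c]eq_sym.
rewrite /dS (cardsD1 (m x) (children r par x)) inE mr pm eqxx /=.
by rewrite add0n.
Qed.

End Comp.



Lemma w_index l k : l \notin T -> 0 < k -> iter k.-1 par l != r ->
  (forall i, 0 < i < k -> m (iter i par l) = iter i.-1 par l) ->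
  m (iter k par l) != iter k.-1 par l ->
  w T r par m (m l) = (\sum_(i < k) dS r par (iter i par l)) + 1 - k.
Proof.
move=> Hl kp topr Hch Hk.
set top := iter k.-1 par l.
have dtop : dep top = dep l - k.-1 by rewrite dep_iter.
have kl : k.-1 < dep l.
  rewrite ltnNge; apply/negP => /iter_ge; apply/eqP; exact: topr.
have Htop : anc top l by apply/ancP; exists k.-1.
have Htopu : m (par top) != top by rewrite /top -iterS prednK.
have Hmid : forall y, anc top y -> anc y l -> y != top -> m (par y) = y.
  move=> y ty yl yt.
  have yr : y != r.
    apply/eqP => e; rewrite e in ty.
    by move: topr; rewrite -/top (anc_antisym ty (anc_rt top)) eqxx.
  have [j jl ey] := anc_iter_form yl yr; subst y.
  have := anc_le ty; rewrite dtop dep_iter => le.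
  have jk : j < k.-1.
    rewrite ltn_neqAle; apply/andP; split; last by lia.
    by apply/eqP => e; move: yt; rewrite e eqxx.
  by rewrite -iterS Hch //=; lia.
rewrite (w_comp Hl Htop topr Htopu Hmid).
have inj : {in [set: 'I_k] &, injective (fun i : 'I_k => iter i par l)}.
  move=> i j _ _ /(congr1 dep); rewrite !dep_iter => e.
  apply: ord_inj; have := ltn_ord i; have := ltn_ord j; lia.
have -> : Ucomp l top = (fun i : 'I_k => iter i par l) @: [set: 'I_k].
  apply/setP => x; rewrite /Ucomp inE; apply/idP/idP.
    case/andP=> xl tx; apply/imsetP.
    have xr : x != r.
      apply/eqP => e; rewrite e in tx.
      by move: topr; rewrite -/top (anc_antisym tx (anc_rt top)) eqxx.
    have [j jl ex] := anc_iter_form xl xr; subst x.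
    have := anc_le tx; rewrite dtop dep_iter => le.
    have jk : j < k by lia.
    by exists (Ordinal jk).
  case/imsetP=> i _ ex; subst x; apply/andP; split; first by apply/ancP; exists i.
  apply/ancP; exists (k.-1 - i); rewrite /top -iterD subnK //.
  by have := ltn_ord i; lia.
rewrite big_imset //=.
have pos : forall i : 'I_k, 0 < dS r par (iter i par l).
  move=> i; have xT : iter i par l \notin T.
    apply/negP => xT.
    have : anc (iter i par l) l by apply/ancP; exists i.
    by move/(anc_term xT) => e; move: Hl; rewrite e xT.
  have [mr pm] := m_child xT.
  by apply/card_gt0P; exists (m (iter i par l)); rewrite inE mr pm eqxx.
have E1 : \sum_(i in [set: 'I_k]) (dS r par (iter i par l)).-1 =
          \sum_(i < k) (dS r par (iter i par l)).-1.
  by apply: eq_bigl => i; rewrite inE.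
have E2 : \sum_(i < k) 1 = k.
  by rewrite big_const_ord iter_addn_0 mul1n.
have E : \sum_(i < k) dS r par (iter i par l) =
         \sum_(i < k) (dS r par (iter i par l)).-1 + \sum_(i < k) 1.
  rewrite -big_split /=; apply: eq_bigr => i _; have := pos i; lia.
rewrite E1 E E2; lia.
Qed.

End Mark.

Section Prob.
Hypothesis Hsteiner_child : forall l : V, l \notin T -> exists2 u : V, u != r & par u = l.
Variables (l : V) (q : nat).
Hypothesis Hl : l \notin T.
Hypothesis Hlr : l != r.
Hypothesis Hq : 2 <= q.
Hypothesis Htq : 0 < tS T r par (iter q.-1 par l).
Hypothesis Hmid0 : forall i : nat, 1 <= i < q.-1 -> tS T r par (iter i par l) = 0.

Notation u i := (iter i par l).

Lemma u_nr i : i < q.-1 -> u i != r.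
Proof.
move=> iq; case: i iq => [|i] iq; first exact: Hlr.
apply/eqP => e.
have e2 : u q.-1 = r by rewrite -(subnK (ltnW iq)) iterD e iter_r.
have H : tS T r par (u i.+1) = 0 by apply: Hmid0; rewrite iq.
by rewrite e in H; move: Htq; rewrite e2 H.
Qed.

Lemma u_dep i : i < q.-1 -> i < dep l.
Proof.
move=> /u_nr H; rewrite ltnNge; apply/negP => /iter_ge; apply/eqP; exact: H.
Qed.

Lemma u_nT i : u i \notin T.
Proof.
apply/negP => xT; have : anc (u i) l by apply/ancP; exists i.
by move/(anc_term xT) => e; move: Hl; rewrite e xT.
Qed.

Lemma u_allowed i : 1 <= i < q.-1 -> allowed T r par (u i) = children r par (u i).
Proof. by move=> /Hmid0 H; rewrite /allowed H. Qed.

Lemma allowed_nonempty v : v \notin T -> 0 < #|allowed T r par v|.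
Proof.
move=> vT; rewrite /allowed; case: ifP => [//|_].
have [c cr pc] := Hsteiner_child vT.
by apply/card_gt0P; exists c; rewrite inE cr pc eqxx.
Qed.

Definition Sv v := if v \in T then [set v] else allowed T r par v.

Definition Uk k := (fun i : 'I_k => u i) @: [set i : 'I_k | 0 < i].

Definition Sk k v := if v \in Uk k then Sv v :&: [set x | anc x l] else Sv v.

Lemma Uk_mem k v : (v \in Uk k) = [exists i : 'I_k, (0 < i) && (v == u i)].
Proof.
apply/imsetP/existsP => [[i]|[i /andP[ip /eqP ->]]].
  by rewrite inE => ip ->; exists i; rewrite ip eqxx.
by exists i; rewrite ?inE.
Qed.

Lemma Uk_nT k v : v \in Uk k -> v \notin T.
Proof. by rewrite Uk_mem => /existsP[i /andP[_ /eqP ->]]; exact: u_nT. Qed.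

Lemma Sk_u k i : k <= q.-1 -> 0 < i < k ->
  Sk k (u i) = [set u i.-1].
Proof.
move=> kq /andP[ip ik].
have ui : u i \in Uk k by rewrite Uk_mem; apply/existsP; exists (Ordinal ik); rewrite ip eqxx.
rewrite /Sk ui /Sv (negbTE (u_nT i)) u_allowed; last by rewrite ip; lia.
apply/setP => x; rewrite !inE; apply/idP/idP.
  case/andP=> /andP[xr /eqP px] xl.
  have [j jl ej] := anc_iter_form xl xr; subst x.
  move: px; rewrite -iterS => /(congr1 dep); rewrite !dep_iter => e.
  have iq : i < q.-1 by lia.
  have il := u_dep iq.
  have -> : j = i.-1 by lia.
  by [].
move/eqP => ->; rewrite -iterS prednK // eqxx andbT u_nr ?andTb; last by lia.
by apply/ancP; exists i.-1.
Qed.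

Lemma Uk_sub k k' : k <= k' -> Uk k \subset Uk k'.
Proof.
move=> kk; apply/subsetP => v; rewrite !Uk_mem => /existsP[i /andP[ip /eqP ->]].
have ik : i < k' by apply: leq_trans (ltn_ord i) kk.
by apply/existsP; exists (Ordinal ik); rewrite ip eqxx.
Qed.

Lemma Uk_last k v : v \in Uk k.+1 -> v \notin Uk k -> v = u k.
Proof.
rewrite !Uk_mem => /existsP[i /andP[ip /eqP ->]] H.
have [ik|] := ltnP i k.
  by move: H => /existsP []; exists (Ordinal ik); rewrite ip eqxx.
by have := ltn_ord i => a b; have -> : nat_of_ord i = k by lia.
Qed.

Lemma Sk_T k v : v \in T -> Sk k v = [set v].
Proof.
move=> vT; rewrite /Sk /Sv vT; case: ifP => // /Uk_nT.
by rewrite vT.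
Qed.

Lemma Sk_nU k v : v \notin Uk k -> Sk k v = Sv v.
Proof. by rewrite /Sk => /negbTE ->. Qed.

Definition famk k := [pred m : {ffun V -> V} | [forall v, m v \in Sk k v]].

Lemma famk_valid k m : m \in famk k -> valid_marking T r par m.
Proof.
rewrite inE => /forallP H; apply/forallP => v; have := H v.
rewrite /Sk /Sv; case: ifP => _; case: ifP => _; rewrite ?inE //.
  by case/andP.
by case/andP.
Qed.

Lemma famk_chain k m : k <= q.-1 -> m \in famk k ->
  forall i, 0 < i < k -> m (u i) = u i.-1.
Proof.
move=> kq; rewrite inE => /forallP H i ik.
by have := H (u i); rewrite Sk_u // inE => /eqP.
Qed.

Lemma famk1 m : (m \in famk 1) = valid_marking T r par m.
Proof.
rewrite inE /valid_marking; apply: eq_forallb => v.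
have -> : Sk 1 v = Sv v.
  apply: Sk_nU; rewrite Uk_mem; apply/existsP => [[i]].
  by have := ltn_ord i; case: (nat_of_ord i).
by rewrite /Sv; case: ifP => _; rewrite ?inE.
Qed.

Lemma famk_mono k m : m \in famk k.+1 -> m \in famk k.
Proof.
rewrite !inE => /forallP H; apply/forallP => v; have := H v.
have sub := subsetP (Uk_sub (leqnSn k)).
have [vU|vU] := boolP (v \in Uk k); first by rewrite /Sk vU (sub _ vU).
by rewrite /Sk (negbTE vU); case: ifP => _ //; rewrite inE => /andP[].
Qed.

Lemma famk_last k m : k.+1 <= q.-1 -> m \in famk k -> m \notin famk k.+1 ->
  m (u k) != u k.-1.
Proof.
move=> kq Hk; have Hv := famk_valid Hk.
move: Hk; rewrite !inE => /forallP Hk /forallPn[v Hv'].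
have sub := subsetP (Uk_sub (leqnSn k)).
have [vU|vU] := boolP (v \in Uk k.+1); last first.
  have vU' : v \notin Uk k by apply/negP => /sub; rewrite (negbTE vU).
  by move: Hv'; rewrite Sk_nU // -(Sk_nU vU') Hk.
have [vU'|vU'] := boolP (v \in Uk k).
  by move: Hv'; rewrite /Sk vU; have := Hk v; rewrite /Sk vU' => ->.
have ev := Uk_last vU vU'; subst v.
move: Hv'; rewrite /Sk vU inE negb_and => /orP[H|].
  exfalso; move: H; rewrite /Sv (negbTE (u_nT k)).
  by rewrite (m_allowed Hv (u_nT k)).
rewrite inE; apply: contra => /eqP ->.
by apply/ancP; exists k.-1.
Qed.

Lemma famk_top m : m \in famk q.-1 -> m (u q.-1) != u q.-1.-1.
Proof.
move=> Hk; have Hv := famk_valid Hk.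
have := m_allowed Hv (u_nT q.-1); rewrite /allowed Htq inE => /andP[_ mT].
by apply/eqP => e; move: mT; rewrite e (negbTE (u_nT _)).
Qed.

Lemma w_famk k m : 0 < k -> k <= q.-1 -> m \in famk k ->
  (k = q.-1 \/ (k < q.-1 /\ m \notin famk k.+1)) ->
  w T r par m (m l) = (\sum_(i < k) dS r par (u i)) + 1 - k.
Proof.
move=> kp kq Hk Hlast; have Hv := famk_valid Hk.
apply: w_index => //.
- apply: u_nr; lia.
- exact: famk_chain kq Hk.
case: Hlast => [ek|[kq' Hn]]; first by subst k; exact: famk_top.
exact: famk_last.
Qed.

Lemma prob_famk (R : realFieldType) k : k <= q.-1 ->
  ((\prod_(v in ~: T) (#|allowed T r par v|%:R)^-1 : R) * (#|famk k|)%:R =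
   (\prod_(1 <= i < k) ((dS r par (u i))%:R : R))^-1)%R.
Proof.
move=> kq.
rewrite card_fam natr_prod.
rewrite [X in (_ * X)%R](bigID (fun v => v \in T)) /=.
rewrite [X in (_ * (X * _))%R]big1 ?mul1r; last first.
  by move=> v vT; rewrite Sk_T // cards1.
rewrite [X in (X * _)%R](eq_bigl (fun v => ~~ (v \in T))); last first.
  by move=> v; rewrite inE.
rewrite -big_split /=.
rewrite (eq_bigr (fun v => if v \in Uk k then ((dS r par v)%:R)^-1 else 1)%R); last first.
  move=> v vT; case: ifP => vU.
    move: vU; rewrite Uk_mem => /existsP[i /andP[ip /eqP ev]]; subst v.
    rewrite Sk_u ?ip ?ltn_ord // cards1 mulr1 u_allowed //.
    by rewrite ip /=; have := ltn_ord i; lia.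
  rewrite Sk_nU ?vU // /Sv (negbTE vT) mulVf //.
  by rewrite pnatr_eq0 -lt0n allowed_nonempty.
rewrite -big_mkcondr /=.
rewrite (eq_bigl (fun v => v \in Uk k)); last first.
  by move=> v; case vU: (v \in Uk k); rewrite ?andbT ?andbF // (Uk_nT vU).
rewrite /Uk big_imset /=; last first.
  move=> i j; rewrite !inE => ip jp /(congr1 dep); rewrite !dep_iter => e.
  have il : i < dep l by apply: u_dep; have := ltn_ord i; lia.
  have jl : j < dep l by apply: u_dep; have := ltn_ord j; lia.
  apply: ord_inj; lia.
rewrite prodfV big_geq_mkord; congr (_ ^-1)%R.
by apply: eq_bigl => i; rewrite inE.
Qed.

Lemma dS_pos i : 0 < dS r par (u i).
Proof.
have [c cr pc] := Hsteiner_child (u_nT i).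
by apply/card_gt0P; exists c; rewrite inE cr pc eqxx.
Qed.

Section Real.
Variable R : realFieldType.
Local Open Scope ring_scope.

Definition cc : R := \prod_(v in ~: T) (#|allowed T r par v|%:R)^-1.
Definition Wk k := ((\sum_(i < k) dS r par (u i)) + 1 - k)%N.
Definition Fk k : R := \sum_(m in famk k) harm R (w T r par m (m l)).

Lemma stepF k : (0 < k)%N -> (k < q.-1)%N ->
  Fk k - harm R (Wk k) *+ #|famk k| = Fk k.+1 - harm R (Wk k) *+ #|famk k.+1|.
Proof.
move=> kp kq.
rewrite /Fk -!sumr_const -!sumrB.
rewrite (bigID (fun m => m \in famk k.+1)) /=.
rewrite [X in _ + X]big1 ?addr0; last first.
  move=> m /andP[Hk Hn]; rewrite (w_famk kp _ Hk) ?subrr //; first lia.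
  by right; split.
apply: eq_bigl => m; apply/andP/idP => [[]//|H]; split => //; exact: famk_mono.
Qed.

Lemma lastF : Fk q.-1 = harm R (Wk q.-1) *+ #|famk q.-1|.
Proof.
rewrite /Fk -sumr_const; apply: eq_bigr => m Hm.
by rewrite (w_famk _ _ Hm) //; [lia | left].
Qed.

Definition Pk k : R := \prod_(1 <= i < k) ((dS r par (u i))%:R : R).

Lemma Pk_neq0 k : Pk k != 0.
Proof.
rewrite /Pk prodf_seq_neq0; apply/allP => i _; apply/implyP => _.
by rewrite pnatr_eq0 -lt0n dS_pos.
Qed.

Lemma cost_eq :
  cost T r par R l =
    \sum_(1 <= h < q.-1)
       (((dpath r par l h)%:R - 1) *
        harm R ((\sum_(i < h) dpath r par l i) + 1 - h)%N /
        \prod_(1 <= i < h.+1) (dpath r par l i)%:R)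
  + harm R ((\sum_(i < q.-1) dpath r par l i) + 2 - q)%N /
        \prod_(1 <= i < q.-1) (dpath r par l i)%:R.
Proof.
have c1 : cost T r par R l = cc * Fk 1.
  rewrite /cost /Fk mulr_sumr; apply: eq_bigl => m; by rewrite famk1.
pose a k := cc * Fk k.
have q1 : (1 <= q.-1)%N by lia.
have tel : \sum_(1 <= k < q.-1) (a k.+1 - a k) = a q.-1 - a 1%N by apply: telescope_sumr.
have a1 : a 1%N = a q.-1 + \sum_(1 <= h < q.-1) (a h - a h.+1).
  have -> : \sum_(1 <= h < q.-1) (a h - a h.+1) = - \sum_(1 <= h < q.-1) (a h.+1 - a h).
    by rewrite -sumrN; apply: eq_bigr => h _; rewrite opprB.
  by rewrite tel opprB addrC subrK.
rewrite c1 -/(a 1%N) a1 addrC; congr (_ + _).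
  apply: eq_big_nat => h /andP[h1 hq].
  have := stepF h1 hq => E.
  have E2 : a h - a h.+1 = harm R (Wk h) * (cc * #|famk h|%:R - cc * #|famk h.+1|%:R).
    move: E; rewrite -[harm R (Wk h) *+ #|famk h|]mulr_natr.
    rewrite -[harm R (Wk h) *+ #|famk h.+1|]mulr_natr => E.
    have EF : Fk h = Fk h.+1 - harm R (Wk h) * #|famk h.+1|%:R + harm R (Wk h) * #|famk h|%:R.
      by rewrite -E subrK.
    rewrite /a EF; ring.
  rewrite E2 !prob_famk; [|lia|lia].
  rewrite /dpath big_nat_recr //= -/(Pk h) /Wk.
  have := Pk_neq0 h; have : ((dS r par (u h))%:R : R) != 0 by rewrite pnatr_eq0 -lt0n dS_pos.
  move=> d0 p0; rewrite /Pk in p0 *; field.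
  by rewrite d0 p0.
rewrite /a lastF -mulr_natr mulrCA prob_famk // /Wk /dpath.
have -> : ((\sum_(i < q.-1) dS r par (u i)) + 1 - q.-1 = (\sum_(i < q.-1) dS r par (u i)) + 2 - q)%N by lia.
by rewrite mulrC.
Qed.

End Real.

End Prob.

End Tree.

Unset Implicit Arguments.
Local Open Scope ring_scope.

Theorem lemma5 (R : realFieldType) (V : finType) (T : {set V}) (r : V)
  (par : V -> V)
  (* rooted tree structure *)
  (Hpar_r : par r = r)
  (Hreach : forall v : V, exists n : nat, iter n par v = r)
  (* root is a Steiner node adjacent to a terminal *)
  (Hr : r \notin T)
  (Hroot_adj : exists2 t : V, t \in T & par t = r)
  (* every terminal has degree 1: it is a non-root leaf *)
  (Hterm_leaf : forall t u : V, t \in T -> u != r -> par u != t)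
  (* every Steiner node has a child (marking scheme well defined) *)
  (Hsteiner_child : forall l : V, l \notin T -> exists2 u : V, u != r & par u = l)
  (* a non-root Steiner node l and its path l = l_1, ..., l_q *)
  (l : V) (Hl : l \notin T) (Hlr : l != r)
  (q : nat) (Hq : (2 <= q)%N)
  (Htq : (0 < tS T r par (iter q.-1 par l))%N)
  (Hmid : forall i : nat, (1 <= i < q.-1)%N -> tS T r par (iter i par l) = 0%N) :
  cost T r par R l =
    \sum_(1 <= h < q.-1)
       (((dpath r par l h)%:R - 1) *
        harm R ((\sum_(i < h) dpath r par l i) + 1 - h)%N /
        \prod_(1 <= i < h.+1) (dpath r par l i)%:R)
  + harm R ((\sum_(i < q.-1) dpath r par l i) + 2 - q)%N /
        \prod_(1 <= i < q.-1) (dpath r par l i)%:R.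
Proof.
exact: (@cost_eq V T r par Hpar_r Hreach Hr Hterm_leaf Hsteiner_child l q Hl Hlr Hq Htq Hmid R).
Qed.
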